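(* Let $X_1$ and $X_2$ be uniformly quasi-locally bounded semimetric spaces with basepoints $x_1$ and $x_2$ respectively, and let $\beta_j$ be the growth function of $X_j$ at $x_j$ for $j=1,2$. If $X_1$ quasi-isometrically embeds into $X_2$, then $\beta_1\preccurlyeq\beta_2$. In particular, if $X_1$ and $X_2$ are quasi-isometric then $\beta_1\sim\beta_2$.
   Context: A semimetric space is a set $X$ with $d:X\times X\to\mathbb{R}^{\ge0}\cup\{\infty\}$ with $d(x,y)=0$ iff $x=y$ and the triangle inequality (not necessarily symmetric). A basepoint is $x_0$ with $d(x_0,y)<\infty$ for all $y$. Out-ball $\overrightarrow{\mathcal{B}}_t(x)=\{y:d(x,y)\le t\}$. $X$ is uniformly quasi-locally bounded if $\sup_{x\in X}|\overrightarrow{\mathcal{B}}_t(x)|<\infty$ for all $t\in\mathbb{N}$; its growth function at $x_0$ is $\beta(t)=|\overrightarrow{\mathcal{B}}_t(x_0)|$. A map $f:X\to X'$ is a quasi-isometric embedding if there are $1\le\lambda<\infty$, $0<\epsilon<\infty$ with $\frac1\lambda d(x,y)-\epsilon\le d'(f(x),f(y))\le\lambda d(x,y)+\epsilon$ for all $x,y$; a quasi-isometry if moreover for some $0\le\mu<\infty$ every $x'\in X'$ has some $x$ with $\max(d'(x',f(x)),d'(f(x),x'))\le\mu$. For monotone non-decreasing $\alpha_1,\alpha_2:\mathbb{N}\to\mathbb{N}$, $\alpha_1\preccurlyeq\alpha_2$ means there are natural numbers $k_1,k_2\ge1$ with $\alpha_1(t)\le k_1\alpha_2(k_2t)$ for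 all $t$, and $\alpha_1\sim\alpha_2$ means both $\alpha_1\preccurlyeq\alpha_2$ and $\alpha_2\preccurlyeq\alpha_1$. *)

(* Defs.v *)
From HB Require Import structures.
From mathcomp Require Import all_boot all_order all_algebra.
From mathcomp Require Import all_classical all_reals ereal.
From mathcomp Require Import finmap.
Set Implicit Arguments. Unset Strict Implicit. Unset Printing Implicit Defensive.
Import Order.TTheory GRing.Theory Num.Theory.
Local Open Scope classical_set_scope.
Local Open Scope ring_scope.
Local Open Scope ereal_scope.

Section Defs.
Variable R : realType.

Definition is_semimetric (X : Type) (d : X -> X -> \bar R) : Prop :=
  (forall x y, 0 <= d x y) /\
  (forall x y, d x y = 0 <-> x = y) /\
  (forall x y z, d x z <= d x y + d y z).

Definition is_basepoint (X : Type) (d : X -> X -> \bar R) (x0 : X) : Prop :=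
  forall y, d x0 y < +oo.

Definition out_ball (X : Type) (d : X -> X -> \bar R) (x : X) (t : R) : set X :=
  [set y | d x y <= t%:E].

Definition unif_quasi_locally_bounded (X : choiceType) (d : X -> X -> \bar R) : Prop :=
  forall t : nat, exists N : nat, forall x : X,
    finite_set (out_ball d x t%:R) /\ (#|` fset_set (out_ball d x t%:R)| <= N)%N.

Definition growth (X : choiceType) (d : X -> X -> \bar R) (x0 : X) (t : nat) : nat :=
  #|` fset_set (out_ball d x0 t%:R)|.

Definition qi_embedding (X X' : Type) (d : X -> X -> \bar R) (d' : X' -> X' -> \bar R)
  (f : X -> X') : Prop :=
  exists (lam eps : R), (1 <= lam)%R /\ (0 < eps)%R /\
    forall x y, (lam^-1)%:E * d x y - eps%:E <= d' (f x) (f y) /\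
                d' (f x) (f y) <= lam%:E * d x y + eps%:E.

Definition quasi_isometry (X X' : Type) (d : X -> X -> \bar R) (d' : X' -> X' -> \bar R)
  (f : X -> X') : Prop :=
  qi_embedding d d' f /\
  exists mu : R, (0 <= mu)%R /\
    forall x' : X', exists x : X, maxe (d' x' (f x)) (d' (f x) x') <= mu%:E.
End Defs.

Definition preceq (a1 a2 : nat -> nat) : Prop :=
  exists k1 k2 : nat, (1 <= k1)%N /\ (1 <= k2)%N /\
    forall t, (a1 t <= k1 * a2 (k2 * t))%N.

Definition equiv_growth (a1 a2 : nat -> nat) : Prop := preceq a1 a2 /\ preceq a2 a1.

(* Main.v *)
Require Import Defs.
From mathcomp Require Import all_boot all_order all_algebra.
From mathcomp Require Import all_classical all_reals ereal finmap.
From mathcomp Require Import lra zify.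
Import Order.TTheory GRing.Theory Num.Theory.
Local Open Scope classical_set_scope.
Local Open Scope fset_scope.

Lemma count_fib (T U : choiceType) (h : T -> U) (N : nat) (B : {fset U}) :
  forall A : {fset T}, {in A, forall a, h a \in B} ->
  (forall b, #|` [fset a | a in A & h a == b]| <= N)%N ->
  (#|` A| <= N * #|` B|)%N.
Proof.
elim/fset1U_rect: B => [|b B bB IH] A hA hN.
  case: (fset_0Vmem A) => [->|[a aA]]; first by rewrite cardfs0.
  by move: (hA a aA); rewrite inE.
have -> : A = [fset a | a in A & h a == b] `|` [fset a | a in A & h a != b].
  apply/fsetP => a; rewrite !inE; by case: (a \in A); case: (h a == b).
apply: leq_trans (leq_card_fsetU _ _) _.
rewrite cardfsU1 bB /= mulnDr muln1.
apply: leq_add; first exact: hN.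
apply: IH.
  move=> a; rewrite !inE => /andP[aA hab]; move: (hA a aA); rewrite !inE.
  by rewrite (negbTE hab).
move=> c; apply: leq_trans (hN c); apply: fsubset_leq_card.
apply/fsubsetP => a; rewrite !inE; by case/andP=> /andP[-> _] ->.
Qed.

Local Open Scope ring_scope.
Local Open Scope ereal_scope.

Lemma core (R : realType) (X Y : choiceType) (d : X->X->\bar R) (d' : Y->Y->\bar R)
  x0 y0 (h : X -> Y) (r C K : R) :
 (forall y, d' y y = 0) -> unif_quasi_locally_bounded d -> unif_quasi_locally_bounded d' ->
 (0<=C)%R -> (0<=K)%R -> (0 <= r)%R ->
 (forall a y, h a = h y -> d a y <= r%:E) ->
 (forall x (t:nat), (1<=t)%N -> d x0 x <= t%:R%:E -> d' y0 (h x) <= (C + K * t%:R)%:E) ->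
 preceq (growth d x0) (growth d' y0).
Proof.
move=> dd' U U' C0 K0 r0 hfib hball.
pose m := Num.bound r.
have rm : (r <= m%:R)%R by apply/ltW/archi_boundP.
case: (U 0%N) => N0 HN0; case: (U m) => Nm HNm.
pose k2 := (Num.bound (C+K)).+1.
have CK : (C + K <= k2%:R)%R.
  apply: (le_trans (ltW (archi_boundP _))); first lra.
  by rewrite ler_nat.
exists (N0 + Nm).+1%N, k2; split; first by []; split; first by [].
have pos: forall s:nat, (0 < growth d' y0 s)%N.
  move=> s; rewrite /growth cardfs_gt0; apply/fset0Pn; exists y0.
  rewrite in_fset_set; last by case: (U' s) => N /(_ y0) [].
  by apply: mem_set; rewrite /out_ball /= dd' lee_fin ler0n.
case=> [|t].
  have := (HN0 x0).2; have := pos (k2 * 0)%N; rewrite /growth; nia.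
set A := fset_set (out_ball d x0 t.+1%:R).
set B := fset_set (out_ball d' y0 (k2 * t.+1)%N%:R).
have finA : finite_set (out_ball d x0 t.+1%:R) by case: (U t.+1) => N /(_ x0) [].
have finB : finite_set (out_ball d' y0 (k2 * t.+1)%N%:R)
  by case: (U' (k2 * t.+1)%N) => N /(_ y0) [].
have cA : (#|` A| <= Nm * #|` B|)%N.
  apply: count_fib.
    move=> a; rewrite /A /B !in_fset_set // => /set_mem aA; apply: mem_set.
    move: (hball a t.+1 isT aA) => /le_trans; apply; rewrite lee_fin.
    rewrite natrM.
    have T1 : (1 <= t.+1%:R :> R)%R by rewrite ler1n.
    nra.
  move=> b; case: (fset_0Vmem [fset a | a in A & h a == b]) => [->|[a aF]].
    by rewrite cardfs0.
  apply: leq_trans (fsubset_leq_card _) ((HNm a).2).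
  apply/fsubsetP => y; move: aF; rewrite !inE => /andP[_ /eqP hab] /andP[_ /eqP hyb].
  rewrite in_fset_set; last exact: (HNm a).1.
  apply: mem_set; rewrite /out_ball /=; apply: le_trans (hfib a y _) _.
    by rewrite hab hyb.
  by rewrite lee_fin.
rewrite /growth -/A -/B; nia.
Qed.

Lemma finE (R:realType) (e : \bar R) : 0 <= e -> e < +oo -> exists s : R, e = s%:E /\ (0 <= s)%R.
Proof. by case: e => [s| |] //= h _; exists s; rewrite lee_fin in h. Qed.

Lemma qi_low (R : realType) (lam eps s E : R) : (0 < lam)%R ->
  (lam^-1 * s - eps <= E)%R -> (s <= lam * (E + eps))%R.
Proof.
move=> l0 h; have u1 : (lam * lam^-1 = 1)%R by rewrite mulfV // gt_eqF.
have {1}-> : s = (lam * (lam^-1 * s))%R by rewrite mulrA u1 mul1r.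
rewrite ler_pM2l //; lra.
Qed.

Lemma qi_fib (R : realType) (lam eps : R) e : (0 < lam)%R -> 0 <= e ->
  (lam^-1)%:E * e - eps%:E <= 0 -> e <= (lam*eps)%:E.
Proof.
move=> l0; case: e => [s| |] //.
  move=> _; rewrite -EFinM -EFinB !lee_fin => h.
  by have := @qi_low _ _ _ _ _ l0 h; rewrite add0r.
move=> _; rewrite mulry gtr0_sg ?invr_gt0 // mul1e //.
Qed.

Theorem proposition6p4 (R : realType)
  (X1 X2 : choiceType) (d1 : X1 -> X1 -> \bar R) (d2 : X2 -> X2 -> \bar R)
  (x1 : X1) (x2 : X2) :
  is_semimetric d1 -> is_semimetric d2 ->
  is_basepoint d1 x1 -> is_basepoint d2 x2 ->
  unif_quasi_locally_bounded d1 -> unif_quasi_locally_bounded d2 ->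
  ((exists f : X1 -> X2, qi_embedding d1 d2 f) ->
     preceq (growth d1 x1) (growth d2 x2)) /\
  ((exists f : X1 -> X2, quasi_isometry d1 d2 f) ->
     equiv_growth (growth d1 x1) (growth d2 x2)).
Proof.
move=> [n1 [d1E tri1]] [n2 [d2E tri2]] bp1 bp2 U1 U2.
have part1 : forall f, qi_embedding d1 d2 f -> preceq (growth d1 x1) (growth d2 x2).
  move=> f [lam [eps [l1 [e0 Hq]]]].
  have l0 : (0 < lam)%R by lra.
  have [c [dc c0]] := @finE _ _ (n2 _ _) (bp2 (f x1)).
  apply: (@core R X1 X2 d1 d2 x1 x2 f (lam*eps) (c + eps) lam).
  - by move=> y; apply/d2E.
  - exact: U1.
  - exact: U2.
  - lra.
  - lra.
  - nra.
  - move=> a y fay; apply: (@qi_fib _ _ _ _ l0 (n1 _ _)).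
    by have := (Hq a y).1; rewrite fay (proj2 (d2E _ _)).
  - move=> x t _ hx.
    have [s [ds s0]] := @finE _ _ (n1 _ _) (bp1 x).
    apply: le_trans (tri2 x2 (f x1) (f x)) _.
    have := (Hq x1 x).2; rewrite ds -EFinM -EFinD => h.
    rewrite ds lee_fin in hx.
    apply: le_trans (leeD (lexx _) h) _; rewrite dc -EFinD lee_fin; nra.
split; first by move=> [f]; apply: part1.
move=> [f [qf [mu [mu0 Hm]]]]; split; first exact: part1 qf.
case: (choice Hm) => g Hg.
case: qf => lam [eps [l1 [e0 Hq]]].
have l0 : (0 < lam)%R by lra.
have Hg1 x' : d2 x' (f (g x')) <= mu%:E by have := Hg x'; rewrite ge_max => /andP[].
have Hg2 x' : d2 (f (g x')) x' <= mu%:E by have := Hg x'; rewrite ge_max => /andP[].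
have [a0 [da0 a00]] := @finE _ _ (n1 _ _) (bp1 (g x2)).
apply: (@core R X2 X1 d2 d1 x2 x1 g (mu+mu) (lam*(lam*a0 + eps + mu + mu + eps)) lam).
- by move=> y; apply/d1E.
- exact: U2.
- exact: U1.
- nra.
- lra.
- lra.
- move=> a y gay; apply: le_trans (tri2 a (f (g a)) y) _.
  by rewrite EFinD; apply: leeD (Hg1 a) _; rewrite gay; apply: Hg2.
- move=> x' t _ hx.
  have [s [ds s0]] := @finE _ _ (n1 _ _) (bp1 (g x')).
  have Dle : d2 (f x1) (f (g x')) <= (lam*a0 + eps + (mu + (t%:R + mu)))%:E.
    apply: le_trans (tri2 (f x1) (f (g x2)) (f (g x'))) _.
    rewrite EFinD; apply: leeD.
      by have := (Hq x1 (g x2)).2; rewrite da0 -EFinM -EFinD.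
    apply: le_trans (tri2 (f (g x2)) x2 (f (g x'))) _.
    rewrite EFinD; apply: leeD; first exact: Hg2.
    apply: le_trans (tri2 x2 x' (f (g x'))) _.
    by rewrite EFinD; apply: leeD; [exact: hx| exact: Hg1].
  have := le_trans (Hq x1 (g x')).1 Dle.
  rewrite ds -EFinM -EFinB !lee_fin => h.
  have := @qi_low _ _ _ _ _ l0 h; nra.
Qed.
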